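(* Let $d,\tilde d\in\mathbb{R}^m$ with $d,\tilde d>0$ and $\ell,\tilde\ell\in\mathbb{R}^m$ with $f(d,\ell)>0$ and $f(\tilde d,\tilde\ell)>0$. Let $j\in\{1,\dots,m\}$ and suppose $$\frac{1}{f(\tilde d,\tilde\ell)}\tilde d=\alpha\Big(\frac{1}{f(d,\ell)}d+\frac{2}{m-1}\frac{1}{\gamma_j(d,\ell)^2}e_j\Big)$$ for some scalar $\alpha\ge\frac{m^2-1}{m^2}$. If $\big(d_j/f(d,\ell)\big)^{-1/2}\ge\tau(A,u)$, then $\phi(\tilde d,\tilde\ell)\le e^{-\frac{1}{2(m+1)}}\phi(d,\ell)$.
   Context: Standing assumption: $A=[a_1|\cdots|a_m]\in\mathbb{R}^{n\times m}$ has columns of unit Euclidean norm and $\{A\lambda:\lambda\ge0\}=\mathbb{R}^n$ (so $m\ge2$); $u\in\mathbb{R}^m$. $D=\mathrm{diag}(d)$; $r(\ell)=\tfrac12(u+\ell)$, $v(\ell)=\tfrac12(u-\ell)$, $B(d)=ADA^\top$, $y(d,\ell)=B(d)^{-1}ADr(\ell)$, $t(d,\ell)=A^\top y(d,\ell)-r(\ell)$, $f(d,\ell)=v(\ell)^\top Dv(\ell)-t(d,\ell)^\top Dt(d,\ell)$, $\gamma_i(d,\ell)=\sqrt{f(d,\ell)a_i^\top B(d)^{-1}a_i}$. $\tau(A,u):=|z^*|$ with $z^*:=\max_x\min_i(u_i-a_i^\top x)$. Potential: $\phi(d,\ell):=\prod_{i=1}^m\max\Big\{\big(\tfrac{d_i}{f(d,\ell)}\big)^{-1/2},\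 \tfrac{m}{m+1}\tau(A,u)\Big\}$. *)

(* Defs.v *)
(* Vectors in R^k are functions nat -> R
   (only indices < k are meaningful); A is given entrywise: A k i is the
   k-th coordinate (k < n) of the column a_i (i < m). Indices are 0-based. *)
From Stdlib Require Import Reals Lra Lia ClassicalEpsilon.
Open Scope R_scope.

Fixpoint rsum (N : nat) (f : nat -> R) : R :=
  match N with O => 0 | S N' => rsum N' f + f N' end.

Fixpoint rprod (N : nat) (f : nat -> R) : R :=
  match N with O => 1 | S N' => rprod N' f * f N' end.

(* min_{i<N} f i  (for N >= 1; rmin_lt N f = min of f 0, ..., f (N-1)) *)
Fixpoint rmin_upto (N : nat) (f : nat -> R) : R :=
  match N with O => f O | S N' => Rmin (rmin_upto N' f) (f N) end.
Definition rmin_lt (N : nat) (f : nat -> R) : R := rmin_upto (N - 1) f.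

(* M^{-1} b for an n x n matrix M: some w with M w = b (on coordinates < n).
   When M is invertible, w is unique on coordinates < n. *)
Definition solve (n : nat) (M : nat -> nat -> R) (b : nat -> R) : nat -> R :=
  epsilon (inhabits (fun _ : nat => 0))
    (fun w => forall k, (k < n)%nat -> rsum n (fun l => M k l * w l) = b k).

Section Defs.
Variables (n m : nat) (A : nat -> nat -> R) (u : nat -> R).

Definition rvec (l : nat -> R) : nat -> R := fun i => (u i + l i) / 2.
Definition vvec (l : nat -> R) : nat -> R := fun i => (u i - l i) / 2.

Definition Bmat (d : nat -> R) : nat -> nat -> R :=
  fun k l => rsum m (fun i => A k i * d i * A l i).

Definition yvec (d l : nat -> R) : nat -> R :=
  solve n (Bmat d) (fun k => rsum m (fun i => A k i * d i * rvec l i)).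

Definition tvec (d l : nat -> R) : nat -> R :=
  fun i => rsum n (fun k => A k i * yvec d l k) - rvec l i.

Definition fval (d l : nat -> R) : R :=
  rsum m (fun i => vvec l i * d i * vvec l i)
  - rsum m (fun i => tvec d l i * d i * tvec d l i).

Definition aBa (d : nat -> R) (i : nat) : R :=
  rsum n (fun k => A k i * solve n (Bmat d) (fun k' => A k' i) k).

Definition gamma (d l : nat -> R) (i : nat) : R := sqrt (fval d l * aBa d i).

Definition inner_min (x : nat -> R) : R :=
  rmin_lt m (fun i => u i - rsum n (fun k => A k i * x k)).

(* z* = max_x min_i (u_i - a_i^T x) (attained under the standing assumption) *)
Definition zstar : R :=
  epsilon (inhabits 0)
    (fun z => (exists x, inner_min x = z) /\ (forall x, inner_min x <= z)).

Definition tau : R := Rabs zstar.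

Definition phi (d l : nat -> R) : R :=
  rprod m (fun i => Rmax (Rpower (d i / fval d l) (- (1/2)))
                         (INR m / (INR m + 1) * tau)).
End Defs.

(* Main.v *)
Require Import Defs.
From Stdlib Require Import Reals Lra Lia ClassicalEpsilon.
Open Scope R_scope.

Module LA.
From mathcomp Require Import all_boot all_algebra.
From mathcomp Require Import Rstruct.
Import GRing.Theory.

Lemma rsum_big (N : nat) (f : nat -> R) : rsum N f = (\sum_(i < N) f i)%R.
Proof.
elim: N => [|N IH] /=; first by rewrite big_ord0.
by rewrite big_ord_recr /= IH.
Qed.

Lemma solve_exists (n : nat) (M : nat -> nat -> R) (b : nat -> R) :
  (forall w, (forall k, lt k n -> rsum n (fun l => M k l * w l) = 0) ->
     forall k, lt k n -> w k = 0) ->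
  forall k, lt k n -> rsum n (fun l => M k l * solve n M b l) = b k.
Proof.
move=> Hinj.
suff [w Hw] : exists w, forall k, lt k n -> rsum n (fun l => M k l * w l) = b k.
  exact: (epsilon_spec (inhabits (fun _ : nat => 0%R))
    (fun w => forall k, lt k n -> rsum n (fun l => M k l * w l) = b k)
    (ex_intro _ w Hw)).
pose Mt : 'M[R]_n := (\matrix_(i, j) M (nat_of_ord j) (nat_of_ord i))%R.
have detnz : (\det Mt != 0)%R.
  apply/negP => /det0P [v vnz vM].
  pose w := fun k : nat => match ltnP k n with
                           | LtnNotGeq H => v ord0 (Ordinal H) | _ => 0%R end.
  have wE : forall i : 'I_n, w i = v ord0 i.
    move=> i; rewrite /w; case: ltnP => H; last by move: (ltn_ord i); rewrite ltnNge H.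
    by congr (v _ _); apply: val_inj.
  have H0 : forall k, lt k n -> rsum n (fun l => M k l * w l) = 0.
    move=> k Hk; rewrite rsum_big.
    have := congr1 (fun X : 'rV_n => X ord0 (Ordinal (m:=k) (introT ltP Hk))) vM.
    rewrite !mxE /= => HH; apply: etrans HH; apply: eq_bigr => i _; rewrite mxE wE /=.
    by rewrite mulrC.
  move/negP: vnz; apply; apply/eqP/matrixP => i0 i; rewrite mxE (ord1 i0).
  rewrite -wE; apply: Hinj H0 _ _; exact/ltP.
have Hu : Mt \in unitmx by rewrite unitmxE unitfE.
pose bv : 'rV[R]_n := (\row_(i < n) b (nat_of_ord i))%R.
have [v vM] : exists v : 'rV[R]_n, (v *m Mt)%R = bv.
  by exists (bv *m invmx Mt)%R; rewrite -mulmxA mulVmx // mulmx1.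
pose w := fun k : nat => match ltnP k n with
                         | LtnNotGeq H => v ord0 (Ordinal H) | _ => 0%R end.
have wE : forall i : 'I_n, w i = v ord0 i.
  move=> i; rewrite /w; case: ltnP => H; last by move: (ltn_ord i); rewrite ltnNge H.
  by congr (v _ _); apply: val_inj.
exists w => k Hk.
have := congr1 (fun X : 'rV_n => X ord0 (Ordinal (m:=k) (introT ltP Hk))) vM.
rewrite !mxE /= => HH; rewrite rsum_big; apply: etrans HH; apply: eq_bigr => i _.
by rewrite mxE wE mulrC.
Qed.
End LA.

Set Bullet Behavior "Strict Subproofs".

Lemma rsum_ext N f g : (forall i, (i < N)%nat -> f i = g i) -> rsum N f = rsum N g.
Proof. induction N; intros H; simpl; [reflexivity|]. rewrite IHN by (intros; apply H; lia). rewrite H by lia. reflexivity. Qed.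

Lemma rsum_plus N f g : rsum N (fun i => f i + g i) = rsum N f + rsum N g.
Proof. induction N; simpl; [ring|]. rewrite IHN. ring. Qed.

Lemma rsum_scal N c f : rsum N (fun i => c * f i) = c * rsum N f.
Proof. induction N; simpl; [ring|]. rewrite IHN. ring. Qed.

Lemma rsum_zero N : rsum N (fun _ => 0) = 0.
Proof. induction N; simpl; [ring|]. rewrite IHN. ring. Qed.

Lemma rsum_swap N M (F : nat -> nat -> R) :
  rsum N (fun i => rsum M (fun k => F i k)) = rsum M (fun k => rsum N (fun i => F i k)).
Proof.
induction N; simpl.
- symmetry; apply rsum_zero.
- rewrite IHN. rewrite <- rsum_plus. reflexivity.
Qed.

Lemma rsum_nonneg N f : (forall i, (i < N)%nat -> 0 <= f i) -> 0 <= rsum N f.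
Proof. induction N; intros H; simpl; [lra|]. assert (0 <= rsum N f) by (apply IHN; intros; apply H; lia). assert (0 <= f N) by (apply H; lia). lra. Qed.

Lemma rsum_ge_term N f j : (forall i, (i < N)%nat -> 0 <= f i) -> (j < N)%nat -> f j <= rsum N f.
Proof.
induction N; intros H Hj; simpl; [lia|].
assert (0 <= rsum N f) by (apply rsum_nonneg; intros; apply H; lia).
assert (0 <= f N) by (apply H; lia).
destruct (Nat.eq_dec j N) as [->|Hne]; [lra|].
assert (f j <= rsum N f) by (apply IHN; [intros; apply H; lia | lia]). lra.
Qed.

Section Main.
Variables (n m : nat) (A : nat -> nat -> R) (u : nat -> R) (d : nat -> R).
Hypothesis Hd : forall i, (i < m)%nat -> 0 < d i.

Definition cc (w : nat -> R) (i : nat) := rsum n (fun l => A l i * w l).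

Lemma Bw_eq w k : rsum n (fun l => Bmat m A d k l * w l) = rsum m (fun i => A k i * d i * cc w i).
Proof.
unfold Bmat, cc.
transitivity (rsum n (fun l => rsum m (fun i => A k i * d i * (A l i * w l)))).
- apply rsum_ext; intros l _. rewrite Rmult_comm. rewrite <- rsum_scal. apply rsum_ext; intros; ring.
- rewrite rsum_swap. apply rsum_ext; intros i _. apply rsum_scal.
Qed.

Lemma energy w : rsum n (fun k => w k * rsum n (fun l => Bmat m A d k l * w l))
  = rsum m (fun i => d i * (cc w i * cc w i)).
Proof.
transitivity (rsum n (fun k => rsum m (fun i => (A k i * w k) * (d i * cc w i)))).
- apply rsum_ext; intros k _. rewrite Bw_eq. rewrite <- rsum_scal. apply rsum_ext; intros; ring.
- rewrite rsum_swap. apply rsum_ext; intros i _.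
  transitivity (rsum n (fun k => (d i * cc w i) * (A k i * w k))).
  + apply rsum_ext; intros; ring.
  + rewrite rsum_scal. unfold cc. ring.
Qed.

Lemma energy_zero w : rsum m (fun i => d i * (cc w i * cc w i)) = 0 -> forall i, (i < m)%nat -> cc w i = 0.
Proof.
intros H i Hi.
assert (Hnn : forall i, (i < m)%nat -> 0 <= d i * (cc w i * cc w i)).
{ intros i' Hi'. apply Rmult_le_pos; [left; apply Hd; auto| apply Rle_0_sqr]. }
assert (Hle := rsum_ge_term m _ i Hnn Hi). rewrite H in Hle.
assert (Hd' := Hd i Hi). assert (H0 := Hnn i Hi).
assert (H1 : d i * (cc w i * cc w i) = 0) by lra.
destruct (Rmult_integral _ _ H1) as [E|E]; [lra|].
destruct (Rmult_integral _ _ E); auto.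
Qed.

Hypothesis Hcone : forall x : nat -> R, exists lam : nat -> R,
      (forall i, (i < m)%nat -> 0 <= lam i) /\
      (forall k, (k < n)%nat -> rsum m (fun i => A k i * lam i) = x k).

Lemma B_inj w : (forall k, (k < n)%nat -> rsum n (fun l => Bmat m A d k l * w l) = 0) ->
  forall k, (k < n)%nat -> w k = 0.
Proof.
intros H.
assert (Hc : forall i, (i < m)%nat -> cc w i = 0).
{ apply energy_zero. rewrite <- energy. transitivity (rsum n (fun _ => 0)).
  - apply rsum_ext; intros k Hk. rewrite H by auto. ring.
  - apply rsum_zero. }
destruct (Hcone w) as [lam [_ Hlam]].
assert (Hs : rsum n (fun k => w k * w k) = 0).
{ transitivity (rsum n (fun k => rsum m (fun i => (A k i * w k) * lam i))).
  - apply rsum_ext; intros k Hk. rewrite <- (Hlam k Hk) at 2. rewrite <- rsum_scal.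
    apply rsum_ext; intros; ring.
  - rewrite rsum_swap. transitivity (rsum m (fun _ => 0)); [|apply rsum_zero].
    apply rsum_ext; intros i Hi.
    transitivity (lam i * cc w i).
    + unfold cc. rewrite <- rsum_scal. apply rsum_ext; intros; ring.
    + rewrite Hc by auto. ring. }
intros k Hk.
assert (Hnn : forall i, (i < n)%nat -> 0 <= w i * w i) by (intros; apply Rle_0_sqr).
assert (Hle := rsum_ge_term n _ k Hnn Hk). rewrite Hs in Hle.
assert (0 <= w k * w k) by apply Rle_0_sqr.
assert (Hz : w k * w k = 0) by lra. destruct (Rmult_integral _ _ Hz); auto.
Qed.

Hypothesis Hunit : forall i, (i < m)%nat -> rsum n (fun k => A k i ^ 2) = 1.

Lemma aBa_bound j : (j < m)%nat -> 0 < aBa n m A d j /\ d j * aBa n m A d j <= 1.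
Proof.
intros Hj.
set (w := solve n (Bmat m A d) (fun k' => A k' j)).
assert (Hw : forall k, (k < n)%nat -> rsum n (fun l => Bmat m A d k l * w l) = A k j).
{ apply LA.solve_exists. apply B_inj. }
assert (Ht : aBa n m A d j = cc w j).
{ unfold aBa, cc. apply rsum_ext; intros; reflexivity. }
assert (HE : cc w j = rsum m (fun i => d i * (cc w i * cc w i))).
{ rewrite <- energy. unfold cc. apply rsum_ext; intros k Hk. rewrite Hw by auto. ring. }
assert (Hnn : forall i, (i < m)%nat -> 0 <= d i * (cc w i * cc w i)).
{ intros i' Hi'. apply Rmult_le_pos; [left; apply Hd; auto| apply Rle_0_sqr]. }
assert (Hge := rsum_ge_term m _ j Hnn Hj). rewrite <- HE in Hge.
assert (Hpos : 0 < cc w j).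
{ destruct (Rle_lt_dec (cc w j) 0) as [Hle|]; auto.
  assert (H0 : 0 <= cc w j) by (rewrite HE; apply rsum_nonneg; auto).
  assert (Hz : cc w j = 0) by lra.
  assert (Hc := energy_zero w ltac:(rewrite <- HE; exact Hz)).
  assert (HA : forall k, (k < n)%nat -> A k j = 0).
  { intros k Hk. rewrite <- Hw by auto. rewrite Bw_eq.
    transitivity (rsum m (fun _ => 0)); [|apply rsum_zero].
    apply rsum_ext; intros i Hi. rewrite Hc by auto. ring. }
  assert (H : rsum n (fun k => A k j ^ 2) = 0).
  { transitivity (rsum n (fun _ => 0)); [|apply rsum_zero].
    apply rsum_ext; intros k Hk. rewrite HA by auto. ring. }
  rewrite Hunit in H; auto; lra. }
rewrite Ht. split; auto.
assert (Hdj := Hd j Hj).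
(* cc w j >= d j * cc^2 *)
apply Rmult_le_reg_r with (cc w j); auto. nra.
Qed.
End Main.

Lemma rp x : 0 < x -> Rpower x (- (1/2)) = / sqrt x.
Proof. intros Hx. replace (1/2) with (/2) by field. rewrite Rpower_Ropp, Rpower_sqrt; auto. Qed.

Lemma rprod_nonneg N f : (forall i, (i < N)%nat -> 0 <= f i) -> 0 <= rprod N f.
Proof. induction N; intros H; simpl; [lra|]. apply Rmult_le_pos; [apply IHN; intros; apply H; lia| apply H; lia]. Qed.

Lemma rprod_le N f g : (forall i, (i < N)%nat -> 0 <= f i <= g i) -> rprod N f <= rprod N g.
Proof.
induction N; intros H; simpl; [lra|].
apply Rmult_le_compat.
- apply rprod_nonneg; intros; apply H; lia.
- apply H; lia.
- apply IHN; intros; apply H; lia.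
- apply H; lia.
Qed.

Lemma rprod_mult N f g : rprod N (fun i => f i * g i) = rprod N f * rprod N g.
Proof. induction N; simpl; [ring|]. rewrite IHN; ring. Qed.

Lemma rprod_ext N f g : (forall i, (i < N)%nat -> f i = g i) -> rprod N f = rprod N g.
Proof. induction N; intros H; simpl; [reflexivity|]. rewrite IHN by (intros; apply H; lia). rewrite H by lia. reflexivity. Qed.

Lemma rprod_const N b : rprod N (fun _ => b) = b ^ N.
Proof. induction N; simpl; [ring|]. rewrite IHN; ring. Qed.

Lemma rprod_sel N j k b : (j < N)%nat ->
  rprod N (fun i => if Nat.eqb i j then k else b) = b ^ (N - 1) * k.
Proof.
induction N; intros Hj; [lia|]. simpl rprod.
destruct (Nat.eq_dec j N) as [->|Hne].
- rewrite Nat.eqb_refl. rewrite (rprod_ext N _ (fun _ => b)).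
  + rewrite rprod_const. replace (S N - 1)%nat with N by lia. ring.
  + intros i Hi. destruct (Nat.eqb_spec i N); [lia|reflexivity].
- rewrite IHN by lia. destruct (Nat.eqb_spec N j); [lia|].
  replace (S N - 1)%nat with (S (N - 1)) by lia. simpl. ring.
Qed.

Lemma exp_pow_n x N : exp x ^ N = exp (INR N * x).
Proof. induction N; simpl pow. - simpl. rewrite Rmult_0_l, exp_0. reflexivity.
- rewrite IHN, S_INR, <- exp_plus. f_equal; ring. Qed.

Lemma inv_sqrt_le x y k : 0 < x -> 0 < y -> 0 < k -> x <= k * k * y -> / sqrt y <= k * / sqrt x.
Proof.
intros Hx Hy Hk H.
assert (Hsx : 0 < sqrt x) by (apply sqrt_lt_R0; auto).
assert (Hsy : 0 < sqrt y) by (apply sqrt_lt_R0; auto).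
assert (Hs : sqrt x <= k * sqrt y).
{ rewrite <- (sqrt_square k) by lra. rewrite <- sqrt_mult by nra. apply sqrt_le_1; nra. }
replace (/ sqrt y) with (k * / (k * sqrt y)) by (field; lra).
apply Rmult_le_compat_l; [lra|]. apply Rinv_le_contravar; auto.
Qed.

Theorem lemma9 (n m : nat) (A : nat -> nat -> R) (u : nat -> R)
  (Hn : (1 <= n)%nat) (Hm : (2 <= m)%nat)
  (Hunit : forall i, (i < m)%nat -> rsum n (fun k => A k i ^ 2) = 1)
  (Hcone : forall x : nat -> R, exists lam : nat -> R,
      (forall i, (i < m)%nat -> 0 <= lam i) /\
      (forall k, (k < n)%nat -> rsum m (fun i => A k i * lam i) = x k))
  (d dt l lt : nat -> R)
  (Hd : forall i, (i < m)%nat -> 0 < d i)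
  (Hdt : forall i, (i < m)%nat -> 0 < dt i)
  (Hf : 0 < fval n m A u d l) (Hft : 0 < fval n m A u dt lt)
  (j : nat) (Hj : (j < m)%nat) (alpha : R)
  (Halpha : (INR m ^ 2 - 1) / INR m ^ 2 <= alpha)
  (Hupd : forall i, (i < m)%nat ->
      / fval n m A u dt lt * dt i =
      alpha * (/ fval n m A u d l * d i
               + (if Nat.eqb i j
                  then 2 / (INR m - 1) * / (gamma n m A u d l j ^ 2)
                  else 0)))
  (Htau : tau n m A u <= Rpower (d j / fval n m A u d l) (- (1/2))) :
  phi n m A u dt lt <= exp (- (1 / (2 * (INR m + 1)))) * phi n m A u d l.
Proof.
set (F := fval n m A u d l) in *.
set (Ft := fval n m A u dt lt) in *.
set (M := INR m) in *.
assert (HM : 2 <= M) by (unfold M; replace 2 with (INR 2) by (simpl; ring); apply le_INR; auto).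
assert (Htau0 : 0 <= tau n m A u) by (unfold tau; apply Rabs_pos).
set (T := tau n m A u) in *.
set (a0 := (M ^ 2 - 1) / M ^ 2) in *.
assert (Ha0 : 0 < a0) by (unfold a0; apply Rdiv_lt_0_compat; nra).
assert (Hal : 0 < alpha) by lra.
destruct (aBa_bound n m A d Hd Hcone Hunit j Hj) as [Ht1 Ht2].
set (t := aBa n m A d j) in *.
assert (Hg : gamma n m A u d l j ^ 2 = F * t).
{ unfold gamma. fold F t. simpl. rewrite Rmult_1_r. apply sqrt_sqrt. nra. }
rewrite Hg in Hupd.
set (kap := M / (M + 1)).
assert (Hkap : 0 < kap) by (unfold kap; apply Rdiv_lt_0_compat; lra).
set (beta := Rmax (/ sqrt alpha) 1).
assert (Hb1 : 1 <= beta) by apply Rmax_r.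
set (c := M / (M + 1) * T).
assert (Hc : 0 <= c) by (unfold c; apply Rmult_le_pos; [left; auto|auto]).
set (g := fun x => Rmax (Rpower x (- (1/2))) c).
assert (Hg0 : forall x, 0 <= g x) by (intros; unfold g; eapply Rle_trans; [exact Hc| apply Rmax_r]).
assert (Hs : forall i, (i < m)%nat -> 0 < d i / F) by (intros; apply Rdiv_lt_0_compat; auto).
assert (Hst : forall i, (i < m)%nat -> 0 < dt i / Ft) by (intros; apply Rdiv_lt_0_compat; auto).
assert (Hfac : forall i, (i < m)%nat ->
  g (dt i / Ft) <= (if Nat.eqb i j then kap else beta) * g (d i / F)).
{ intros i Hi. unfold g. rewrite (rp _ (Hst i Hi)), (rp _ (Hs i Hi)).
  assert (HU := Hupd i Hi).
  replace (/ Ft * dt i) with (dt i / Ft) in HU by (unfold Rdiv; ring).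
  replace (/ F * d i) with (d i / F) in HU by (unfold Rdiv; ring).
  assert (Hsi := Hs i Hi).
  destruct (Nat.eqb_spec i j) as [->|Hne].
  - apply Rmax_lub.
    + eapply Rle_trans; [|apply Rmult_le_compat_l; [lra|apply Rmax_l]].
      apply inv_sqrt_le; auto. rewrite HU.
      assert (Hq : d j / F <= / (F * t)).
      { unfold Rdiv. rewrite Rinv_mult. 
        replace (d j * / F) with (/ F * (d j * t) * / t) by (field; lra).
        replace (/ F * / t) with (/ F * 1 * / t) by ring.
        apply Rmult_le_compat_r; [left; apply Rinv_0_lt_compat; auto|].
        apply Rmult_le_compat_l; [left; apply Rinv_0_lt_compat; auto| auto]. }
      assert (Hx : d j / F * ((M + 1) / (M - 1)) <= d j / F + 2 / (M - 1) * / (F * t)).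
      { replace (d j / F * ((M + 1) / (M - 1))) with (d j / F + 2 / (M - 1) * (d j / F)) by (field; lra).
        apply Rplus_le_compat_l. apply Rmult_le_compat_l; auto.
        left; apply Rdiv_lt_0_compat; lra. }
      assert (Hk2 : 0 <= kap * kap) by nra.
      apply Rle_trans with (kap * kap * (a0 * (d j / F * ((M + 1) / (M - 1))))).
      * right. unfold kap, a0. field. lra.
      * apply Rmult_le_compat_l; auto.
        apply Rmult_le_compat; auto. left; auto. left; apply Rmult_lt_0_compat; auto.
        apply Rdiv_lt_0_compat; lra.
    + apply Rle_trans with (kap * / sqrt (d j / F)).
      * unfold c. fold kap. apply Rmult_le_compat_l; [lra|]. rewrite <- rp; auto.
      * apply Rmult_le_compat_l; [lra|apply Rmax_l].
  - rewrite Rplus_0_r in HU. rewrite HU.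
    assert (Hsa := sqrt_lt_R0 _ Hal).
    assert (Hss := sqrt_lt_R0 _ Hsi).
    assert (Hm0 : 0 <= Rmax (/ sqrt (d i / F)) c) by (eapply Rle_trans; [exact Hc|apply Rmax_r]).
    apply Rmax_lub.
    + rewrite sqrt_mult by lra. rewrite Rinv_mult.
      apply Rmult_le_compat.
      * left; apply Rinv_0_lt_compat; auto.
      * left; apply Rinv_0_lt_compat; auto.
      * apply Rmax_l.
      * apply Rmax_l.
    + apply Rle_trans with (1 * Rmax (/ sqrt (d i / F)) c).
      * rewrite Rmult_1_l. apply Rmax_r.
      * apply Rmult_le_compat_r; auto. }
assert (Hphi : phi n m A u dt lt <= beta ^ (m - 1) * kap * phi n m A u d l).
{ unfold phi. fold F Ft M T. fold c.
  change (rprod m (fun i => g (dt i / Ft)) <= beta ^ (m - 1) * kap * rprod m (fun i => g (d i / F))).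
  rewrite <- (rprod_sel m j kap beta Hj). rewrite <- rprod_mult.
  apply rprod_le. intros i Hi. split; auto. }
assert (Hphi0 : 0 <= phi n m A u d l).
{ unfold phi. apply rprod_nonneg. intros. fold F M T c. apply (Hg0 (d i / F)). }
assert (HP : beta ^ (m - 1) * kap <= exp (- (1 / (2 * (M + 1))))).
{ set (E := exp (- (1 / (2 * (M + 1))))).
  assert (HE : 0 < E) by apply exp_pos.
  assert (HP0 : 0 <= beta ^ (m - 1) * kap) by (apply Rmult_le_pos; [apply pow_le; lra| lra]).
  assert (Hb2 : beta * beta <= exp (1 / (M ^ 2 - 1))).
  { eapply Rle_trans; [|apply exp_ineq1_le].
    unfold beta, Rmax. destruct (Rle_dec (/ sqrt alpha) 1).
    - assert (0 < 1 / (M ^ 2 - 1)) by (apply Rdiv_lt_0_compat; nra). lra.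
    - rewrite <- Rinv_mult. rewrite sqrt_sqrt by lra.
      replace (1 + 1 / (M ^ 2 - 1)) with (/ a0) by (unfold a0; field; nra).
      apply Rinv_le_contravar; auto. }
  assert (Hbp : (beta * beta) ^ (m - 1) <= exp (1 / (M + 1))).
  { eapply Rle_trans. apply pow_incr. split; [nra|exact Hb2].
    rewrite exp_pow_n. rewrite minus_INR by lia. fold M. simpl INR.
    right. f_equal. field. nra. }
  assert (Hk : kap <= exp (- (1 / (M + 1)))).
  { eapply Rle_trans; [|apply exp_ineq1_le]. right. unfold kap. field. lra. }
  assert (Hsq : (beta ^ (m - 1) * kap) * (beta ^ (m - 1) * kap) <= E * E).
  { replace ((beta ^ (m - 1) * kap) * (beta ^ (m - 1) * kap)) with ((beta * beta) ^ (m - 1) * (kap * kap))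
      by (rewrite Rpow_mult_distr; ring).
    replace (E * E) with (exp (1 / (M + 1)) * (exp (- (1 / (M + 1))) * exp (- (1 / (M + 1))))).
    - apply Rmult_le_compat; [apply pow_le; nra| nra | exact Hbp |].
      apply Rmult_le_compat; lra.
    - unfold E. rewrite <- !exp_plus. f_equal. field. lra. }
  destruct (Rle_lt_dec (beta ^ (m - 1) * kap) E); auto. nra. }
apply Rle_trans with (beta ^ (m - 1) * kap * phi n m A u d l); auto.
apply Rmult_le_compat_r; auto.
Qed.
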